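(* Let $m\ge 2$ and let $n_1,\dots,n_m\ge 4$ be even. Then the strong metric dimension of the even chain cycle satisfies $$sdim(\mathcal{C}(C_{n_1},\dots,C_{n_m}))=1+\sum_{i=1}^{m}\frac{n_i-2}{2}.$$
   Context: Let $C_{n_1},\dots,C_{n_m}$ be pairwise disjoint cycles, $V(C_{n_i})=\{v^i_1,\dots,v^i_{n_i}\}$ with $v^i_j$ adjacent to $v^i_{j+1}$ (indices mod $n_i$). The even chain cycle (all $n_i$ even) is obtained by identifying $v^i_{n_i/2+1}$ with $v^{i+1}_1$ for $i=1,\dots,m-1$. A vertex $w$ strongly resolves distinct vertices $u,v$ if $u$ lies on some shortest $v$–$w$ path or $v$ lies on some shortest $u$–$w$ path. A set $W\subseteq V(G)$ is a strong resolving set if every pair of distinct vertices is strongly resolved by some $w\in W$; $sdim(G)$ is the minimum size of a strong resolving set. *)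

(* Defs.v *)
From mathcomp Require Import all_boot.
Set Implicit Arguments. Unset Strict Implicit. Unset Printing Implicit Defensive.

Section Graph.
Variables (V : finType) (e : rel V).

Definition walk (v w : V) (p : seq V) : bool := path e v p && (last v p == w).

Definition shortest_path (v w : V) (p : seq V) : Prop :=
  walk v w p /\ forall q, walk v w q -> size p <= size q.

Definition on_some_geodesic (v w u : V) : Prop :=
  exists p, shortest_path v w p /\ u \in v :: p.

Definition strongly_resolves (w u v : V) : Prop :=
  on_some_geodesic v w u \/ on_some_geodesic u w v.

Definition strong_resolving_set (W : {set V}) : Prop :=
  forall u v : V, u != v -> exists2 w, w \in W & strongly_resolves w u v.

Definition is_sdim (k : nat) : Prop :=
  (exists W : {set V}, strong_resolving_set W /\ #|W| = k) /\
  (forall W : {set V}, strong_resolving_set W -> k <= #|W|).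
End Graph.

(* Cycles are indexed i = 0..m-1 (paper's i+1), vertices j = 0..n_i-1 (paper's v^{i+1}_{j+1});
   cycle i has n i vertices, j adjacent to (j+1) mod n i. *)
Definition chain_raw (m : nat) (n : nat -> nat) := {i : 'I_m & 'I_(n (val i))}.

Definition raw_code m n (x : chain_raw m n) : nat * nat := (val (tag x), val (tagged x)).

(* the identification v^i_{n_i/2+1} = v^{i+1}_1: vertex (i,0), i >= 1, is identified with
   (i-1, n_(i-1)/2); name i j is the representative of vertex (i,j) *)
Definition chain_name (n : nat -> nat) (i j : nat) : nat * nat :=
  if (0 < i) && (j == 0) then (i.-1, (n i.-1)./2) else (i, j).

Definition chain_keep m n (x : chain_raw m n) : bool :=
  (val (tag x) == 0) || (val (tagged x) != 0).

Definition chain_vertex (m : nat) (n : nat -> nat) := {x : chain_raw m n | chain_keep x}.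

Definition chain_edge m n : rel (chain_vertex m n) := fun x y =>
  [exists i : 'I_m, exists j : 'I_(n (val i)),
     ((chain_name n i j == raw_code (val x)) &&
      (chain_name n i ((j + 1) %% n i) == raw_code (val y)))
  || ((chain_name n i j == raw_code (val y)) &&
      (chain_name n i ((j + 1) %% n i) == raw_code (val x)))].

(* Main.v *)
Require Import Defs.
From mathcomp Require Import all_boot.
From mathcomp Require Import zify.
Set Implicit Arguments. Unset Strict Implicit. Unset Printing Implicit Defensive.

Lemma walk_ge (V : finType) (e : rel V) (d : V -> V -> nat)
  (d0 : forall x, d x x = 0)
  (dlip : forall x y z, e x y -> d x z <= (d y z).+1) :
  forall p x y, walk e x y p -> d x y <= size p.
Proof.
elim=> [|z p IH] x y; rewrite /walk /=.
  by move=> /eqP ->; rewrite d0.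
move=> /andP[/andP[exz pz] ly].
have := IH z y; rewrite /walk pz ly => /(_ isT) h.
by apply: leq_trans (dlip _ _ y exz) _.
Qed.

Lemma walk_ex (V : finType) (e : rel V) (d : V -> V -> nat)
  (d0 : forall x, d x x = 0)
  (dstep : forall x y, x != y -> exists2 x', e x x' & (d x' y).+1 = d x y) :
  forall x y, exists p, walk e x y p /\ size p = d x y.
Proof.
move=> x y; have [k] := ubnP (d x y); elim: k x => [|k IH] x // hk.
have [<-|nxy] := eqVneq x y.
  by exists [::]; rewrite /walk /= eqxx d0.
have [x' exx' dx'] := dstep _ _ nxy.
have [|p [wp sp]] := IH x'; first by lia.
exists (x' :: p); split; last by rewrite /= sp dx'.
by move: wp; rewrite /walk /= exx'.
Qed.

Lemma walk_cat (V : finType) (e : rel V) x y z p q :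
  walk e x y p -> walk e y z q -> walk e x z (p ++ q).
Proof.
rewrite /walk cat_path last_cat => /andP[-> /eqP ->] /andP[-> ->].
by [].
Qed.

Lemma dtri (V : finType) (e : rel V) (d : V -> V -> nat)
  (d0 : forall x, d x x = 0)
  (dlip : forall x y z, e x y -> d x z <= (d y z).+1)
  (dstep : forall x y, x != y -> exists2 x', e x x' & (d x' y).+1 = d x y) :
  forall x y z, d x z <= d x y + d y z.
Proof.
move=> x y z.
have [p [wp sp]] := walk_ex d0 dstep x y.
have [q [wq sq]] := walk_ex d0 dstep y z.
have := walk_ge d0 dlip (walk_cat wp wq).
by rewrite size_cat sp sq.
Qed.

Lemma geo_iff (V : finType) (e : rel V) (d : V -> V -> nat)
  (d0 : forall x, d x x = 0)
  (dlip : forall x y z, e x y -> d x z <= (d y z).+1)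
  (dstep : forall x y, x != y -> exists2 x', e x x' & (d x' y).+1 = d x y) :
  forall v w u, on_some_geodesic e v w u <-> d v u + d u w = d v w.
Proof.
have tri := dtri d0 dlip dstep.
move=> v w u; split.
  move=> [p [[wp minp] up]].
  have [q [wq sq]] := walk_ex d0 dstep v w.
  have sp : size p <= d v w by rewrite -sq; apply: minp.
  apply/eqP; rewrite eqn_leq tri andbT.
  move: up; rewrite in_cons => /orP[/eqP ->|up].
    by rewrite d0.
  case/splitPr: up wp sp => p1 p2 wp sp.
  have w1 : walk e v u (rcons p1 u).
    move: wp; rewrite /walk cat_path rcons_path last_rcons eqxx andbT /=.
    by move=> /andP[/andP[-> /andP[-> _]] _].
  have w2 : walk e u w p2.
    move: wp; rewrite /walk cat_path last_cat /= => /andP[/andP[_ /andP[_ ->]] ->].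
    by [].
  have := walk_ge d0 dlip w1; have := walk_ge d0 dlip w2.
  move: sp; rewrite size_cat size_rcons /=; lia.
move=> h.
have [p [wp sp]] := walk_ex d0 dstep v u.
have [q [wq sq]] := walk_ex d0 dstep u w.
exists (p ++ q); split; first split.
- exact: walk_cat wp wq.
- move=> r wr; rewrite size_cat sp sq h; exact: (walk_ge d0 dlip wr).
- have := mem_last v p; move: wp; rewrite /walk => /andP[_ /eqP ->].
  by rewrite !in_cons mem_cat => /orP[->|->] //; rewrite orbT.
Qed.

Lemma lb_mmd (V : finType) (e : rel V) (d : V -> V -> nat)
  (d0 : forall x, d x x = 0)
  (dlip : forall x y z, e x y -> d x z <= (d y z).+1)
  (dstep : forall x y, x != y -> exists2 x', e x x' & (d x' y).+1 = d x y) :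
  forall a b w, (forall a', e a a' -> d b a' <= d b a) ->
   (forall b', e b b' -> d a b' <= d a b) ->
   strongly_resolves e w a b -> w = a \/ w = b.
Proof.
have tri := dtri d0 dlip dstep.
move=> a b w ma mb [] /(geo_iff d0 dlip dstep) h.
  left; apply/eqP; apply: contraT => nwa.
  have [a' ea da'] := dstep a w ltac:(by rewrite eq_sym).
  have := ma _ ea; have := tri b a' w; lia.
right; apply/eqP; apply: contraT => nwb.
have [b' eb db'] := dstep b w ltac:(by rewrite eq_sym).
have := mb _ eb; have := tri a b' w; lia.
Qed.

Lemma ub_gen (V : finType) (e : rel V) (d : V -> V -> nat)
  (esy : forall x y, e x y -> e y x)
  (dsym : forall x y, d x y = d y x)
  (d0 : forall x, d x x = 0)
  (dlip : forall x y z, e x y -> d x z <= (d y z).+1)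
  (dstep : forall x y, x != y -> exists2 x', e x x' & (d x' y).+1 = d x y)
  (W : {set V}) :
  (forall a b, a != b -> (forall a', e a a' -> d b a' <= d b a) ->
     (forall b', e b b' -> d a b' <= d a b) -> (a \in W) || (b \in W)) ->
  strong_resolving_set e W.
Proof.
have tri := dtri d0 dlip dstep.
have dlip2 : forall x y z, e x y -> d z y <= (d z x).+1.
  by move=> x y z exy; rewrite dsym (dsym z); apply: dlip; apply: esy.
have deq0 : forall x y, d x y = 0 -> x = y.
  move=> x y h; apply/eqP; apply: contraT => nxy.
  by have [x' _] := dstep _ _ nxy; rewrite h.
move=> H u v nuv.
pose S := [pred z | d v u + d u z == d v z].
have Su : S u by rewrite /S inE d0 addn0.
case: (arg_maxnP (fun z => d v z) Su) => z /eqP Sz zmax.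
have zfar : forall z', e z z' -> d v z' <= d v z.
  move=> z' ezz'; rewrite leqNgt; apply/negP => gt.
  have h1 := dlip2 _ _ v ezz'; have h2 := dlip2 _ _ u ezz'.
  have h3 := tri v u z'.
  have : S z' by rewrite /S inE; apply/eqP; lia.
  by move/zmax; lia.
pose T := [pred y | d z v + d v y == d z y].
have Tv : T v by rewrite /T inE d0 addn0.
case: (arg_maxnP (fun y => d z y) Tv) => y /eqP Ty ymax.
have yfar : forall y', e y y' -> d z y' <= d z y.
  move=> y' eyy'; rewrite leqNgt; apply/negP => gt.
  have h1 := dlip2 _ _ z eyy'; have h2 := dlip2 _ _ v eyy'.
  have h3 := tri z v y'.
  have : T y' by rewrite /T inE; apply/eqP; lia.
  by move/ymax; lia.
have zfar2 : forall z', e z z' -> d y z' <= d y z.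
  move=> z' ezz'; have := zfar _ ezz'; have := tri y v z'.
  have := dsym z v; rewrite (dsym y z) (dsym y v); lia.
have nzy : z != y.
  apply/negP => /eqP E; subst y.
  move: Ty; rewrite d0 => Ty.
  have : d v u = 0 by rewrite (dsym z v) in Ty; lia.
  by move/deq0 => E; rewrite E eqxx in nuv.
case/orP: (H z y nzy zfar2 yfar) => inW.
  exists z => //; left; apply/(geo_iff d0 dlip dstep); exact: Sz.
exists y => //; right; apply/(geo_iff d0 dlip dstep).
have := tri z u y; have := tri u v y.
rewrite (dsym z v) (dsym z u) (dsym u v) in Ty *; lia.
Qed.

Definition cd (N a b : nat) := minn ((a - b) + (b - a)) (N - ((a - b) + (b - a))).
Definition sc (N j : nat) := if j.+1 < N then j.+1 else 0.
Definition pc (N j : nat) := if j == 0 then N.-1 else j.-1.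

Lemma cd_sym N a b : cd N a b = cd N b a.
Proof. rewrite /cd; lia. Qed.
Lemma cd_le N h a b : N = h.*2 -> a < N -> b < N -> cd N a b <= h.
Proof. rewrite /cd; lia. Qed.
Lemma cd0 N a b : a < N -> b < N -> cd N a b = 0 -> a = b.
Proof. rewrite /cd; lia. Qed.
Lemma cdh N h a b : N = h.*2 -> a < N -> b < N -> cd N a b = h -> a = b + h \/ b = a + h.
Proof. rewrite /cd; lia. Qed.
Lemma cdh' N h a b : N = h.*2 -> (a = b + h \/ b = a + h) -> cd N a b = h.
Proof. rewrite /cd; lia. Qed.
Lemma sc_lt N j : j < N -> sc N j < N.
Proof. rewrite /sc; case: ifP; lia. Qed.
Lemma pc_lt N j : j < N -> pc N j < N.
Proof. rewrite /pc; case: ifP; lia. Qed.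
Lemma sc_pc N j : j < N -> sc N (pc N j) = j.
Proof. rewrite /sc /pc; case: ifP => /eqP; case: ifP; lia. Qed.
Lemma sc_mod N j : j < N -> (j + 1) %% N = sc N j.
Proof.
move=> jN; rewrite /sc; case: ifP => h.
  by rewrite modn_small addn1.
have -> : j + 1 = N by lia.
by rewrite modnn.
Qed.
Lemma cd_lip1 N t j : t < N -> j < N -> cd N t (sc N j) <= (cd N t j).+1.
Proof. rewrite /cd /sc; case: ifP => ? ? ?; case: (leqP t j) => ?; lia. Qed.
Lemma cd_lip2 N t j : t < N -> j < N -> cd N t j <= (cd N t (sc N j)).+1.
Proof. rewrite /cd /sc; case: ifP => ? ? ?; case: (leqP t j) => ?; lia. Qed.
Lemma cd_up N h t j : N = h.*2 -> t < N -> j < N -> cd N t j < h ->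
  cd N t (sc N j) = (cd N t j).+1 \/ cd N t (pc N j) = (cd N t j).+1.
Proof.
move=> E tN jN lt; case: (leqP t j) => tj.
  case: (ltngtP (j - t) h) => dh.
  - left; move: tN jN tj dh; rewrite /cd /sc E; case: ifP; lia.
  - right; move: tN jN tj dh; rewrite /cd /pc E; case: ifP; lia.
  - exfalso; move: lt tj dh; rewrite /cd E; lia.
case: (ltngtP (t - j) h) => dh.
- right; move: tN jN tj dh; rewrite /cd /pc E; case: ifP; lia.
- left; move: tN jN tj dh; rewrite /cd /sc E; case: ifP; lia.
- exfalso; move: lt tj dh; rewrite /cd E; lia.
Qed.
Lemma cd_down N h t j : N = h.*2 -> t < N -> j < N -> 0 < cd N t j ->
  (cd N t (sc N j)).+1 = cd N t j \/ (cd N t (pc N j)).+1 = cd N t j.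
Proof.
move=> E tN jN lt; case: (leqP t j) => tj.
  case: (leqP (j - t) h) => dh.
  - right; move: lt tN jN tj dh; rewrite /cd /pc E; case: ifP; lia.
  - left; move: tN jN tj dh; rewrite /cd /sc E; case: ifP; lia.
case: (leqP (t - j) h) => dh.
- left; move: tN jN tj dh; rewrite /cd /sc E; case: ifP; lia.
- right; move: tN jN tj dh; rewrite /cd /pc E; case: ifP; lia.
Qed.

Definition prj (n : nat -> nat) (k : nat) (c : nat * nat) :=
  if c.1 < k then 0 else if c.1 == k then c.2 else (n k)./2.
Notation code x := (raw_code (val x)).
Definition dv m n (x y : chain_vertex m n) :=
  \sum_(k < m) cd (n k) (prj n k (code x)) (prj n k (code y)).
Definition goodn (m : nat) (n : nat -> nat) := forall i, i < m -> 4 <= n i /\ ~~ odd (n i).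

Lemma hE m n (Hn : goodn m n) i : i < m -> n i = ((n i)./2).*2 /\ 2 <= (n i)./2.
Proof.
move=> im; have [h4 ev] := Hn i im; have := odd_double_half (n i).
rewrite (negbTE ev) add0n => E; split; first by rewrite E.
lia.
Qed.

Lemma code_bound m n (x : chain_vertex m n) :
  [/\ (code x).1 < m, (code x).2 < n (code x).1 & ((code x).1 == 0) || ((code x).2 != 0)].
Proof. by case: x => [[i p] kp]; split => //=; apply: ltn_ord. Qed.

Lemma code_inj m n (x y : chain_vertex m n) : code x = code y -> x = y.
Proof.
case: x y => [[i p] kp] [[i' p'] kp'] /= [E1 E2].
have Ei : i = i' by apply: val_inj. subst i'.
have Ep : p = p' by apply: val_inj. subst p'.
by apply: val_inj.
Qed.

Lemma exv m n i p (Hi : i < m) (Hp : p < n i) :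
  (i == 0) || (p != 0) -> exists x : chain_vertex m n, code x = (i, p).
Proof.
move=> kp.
by exists (@exist _ (@chain_keep m n) (@existT 'I_m (fun i => 'I_(n (val i))) (Ordinal Hi) (Ordinal Hp)) kp).
Qed.

Lemma name_self n i p : (i == 0) || (p != 0) -> chain_name n i p = (i, p).
Proof.
rewrite /chain_name; case/orP => [/eqP ->|h] //.
by rewrite (negbTE h) andbF.
Qed.

Lemma code_name m n (x : chain_vertex m n) : chain_name n (code x).1 (code x).2 = code x.
Proof. have [_ _ k] := code_bound x; rewrite name_self //; by case: (code x). Qed.

Lemma prj_name n l k q :
  prj n l (chain_name n k q) = if l < k then (n l)./2 else if l == k then q else 0.
Proof.
rewrite /chain_name; case: ifP => [/andP[k0 /eqP q0]|_]; rewrite /prj /=.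
  subst q; case: (ltngtP l k) => h.
  - case: ifP => [?|_]; first lia.
    case: ifP => [/eqP -> //|?]; lia.
  - by case: ifP => //; lia.
  - by subst l; case: ifP => //; lia.
case: (ltngtP l k) => h.
- by [].
- by [].
- by [].
Qed.

Lemma memb_inv n k j i p : chain_name n k j = (i, p) ->
  (k = i /\ j = p /\ ~~((0 < k) && (j == 0))) \/
  (0 < k /\ j = 0 /\ i = k.-1 /\ p = (n i)./2).
Proof.
rewrite /chain_name; case: ifP => [/andP[k0 /eqP j0] [<- <-]| h [<- <-]].
  by right.
by left; repeat split; apply/negbT.
Qed.

Lemma exname m n (Hn : goodn m n) k q : k < m -> q < n k ->
  exists x : chain_vertex m n, code x = chain_name n k q.
Proof.
move=> km qn; rewrite /chain_name; case: ifP => [/andP [k0 _]| h].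
  have km' : k.-1 < m by lia.
  have [E h2] := hE Hn km'.
  have Hp : (n k.-1)./2 < n k.-1 by lia.
  apply: (exv km' Hp).
  by apply/orP; right; lia.
apply: (exv km qn).
by move: h; case: k km qn => [|k] //= _ _ ->.
Qed.

Lemma edge_char m n (x y : chain_vertex m n) : chain_edge x y ->
  exists k j, [/\ k < m, j < n k &
   ((chain_name n k j = code x /\ chain_name n k (sc (n k) j) = code y) \/
    (chain_name n k j = code y /\ chain_name n k (sc (n k) j) = code x))].
Proof.
case/existsP => i /existsP [j /orP [/andP [/eqP h1 /eqP h2] | /andP [/eqP h1 /eqP h2]]];
  exists i, j; rewrite (sc_mod (ltn_ord j)) in h2; split => //; by [left|right].
Qed.

Lemma edge_intro m n (x y : chain_vertex m n) k j : k < m -> j < n k ->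
  chain_name n k j = code x -> chain_name n k (sc (n k) j) = code y -> chain_edge x y.
Proof.
move=> km jn h1 h2; apply/existsP; exists (Ordinal km); apply/existsP; exists (Ordinal jn).
by apply/orP; left; rewrite /= sc_mod // h1 h2 !eqxx.
Qed.

Lemma edge_sym m n (x y : chain_vertex m n) : chain_edge x y -> chain_edge y x.
Proof.
case/existsP => i /existsP [j h]; apply/existsP; exists i; apply/existsP; exists j.
by rewrite orbC.
Qed.

Lemma sum_split m (F G : 'I_m -> nat) (k0 : 'I_m) :
  (forall l, l != k0 -> F l = G l) -> \sum_(l < m) F l + G k0 = \sum_(l < m) G l + F k0.
Proof.
move=> h; rewrite [in LHS](bigD1 k0) // [in RHS](bigD1 k0) //=.
have -> : \sum_(l < m | l != k0) F l = \sum_(l < m | l != k0) G l.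
  by apply: eq_bigr => l hl; apply: h.
by rewrite addnAC [RHS]addnAC [F k0 + _]addnC.
Qed.

Lemma dv_sym m n (x y : chain_vertex m n) : dv x y = dv y x.
Proof. by apply: eq_bigr => l _; rewrite cd_sym. Qed.

Lemma dv0 m n (x : chain_vertex m n) : dv x x = 0.
Proof. rewrite /dv; apply: big1 => l _; rewrite /cd subnn; lia. Qed.

Lemma prj_lt m n (Hn : goodn m n) (x : chain_vertex m n) k : k < m -> prj n k (code x) < n k.
Proof.
move=> km; have [b1 b2 _] := code_bound x; have [E h2] := hE Hn km.
rewrite /prj; case: ifP => _; first lia.
case: ifP => [/eqP <- //|_]; lia.
Qed.

Lemma dv_change m n (y x x' : chain_vertex m n) k j j' (km : k < m) :
  code x = chain_name n k j -> code x' = chain_name n k j' ->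
  dv y x + cd (n k) (prj n k (code y)) j' = dv y x' + cd (n k) (prj n k (code y)) j.
Proof.
move=> h1 h2.
have := @sum_split m (fun l => cd (n l) (prj n l (code y)) (prj n l (code x)))
   (fun l => cd (n l) (prj n l (code y)) (prj n l (code x'))) (Ordinal km).
rewrite /dv /= h1 h2 !prj_name ltnn eqxx; apply.
move=> l hl /=; rewrite !prj_name.
have : val l != k by apply/eqP => E; move/eqP: hl; apply; apply: val_inj; exact: E.
by move/negbTE => ->.
Qed.

Lemma dlip_chain m n (Hn : goodn m n) (x y z : chain_vertex m n) :
  chain_edge x y -> dv x z <= (dv y z).+1.
Proof.
move=> /edge_char [k [j [km jn [[h1 h2]|[h1 h2]]]]].
  rewrite (dv_sym x) (dv_sym y).
  have := dv_change z km (esym h1) (esym h2).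
  have := cd_lip2 (prj_lt Hn z km) jn; lia.
rewrite (dv_sym x) (dv_sym y).
have := dv_change z km (esym h1) (esym h2).
have := cd_lip1 (prj_lt Hn z km) jn; lia.
Qed.

Lemma memb_exists m n (Hn : goodn m n) (x y : chain_vertex m n) : x != y ->
  exists k j, [/\ k < m, j < n k, chain_name n k j = code x & j != prj n k (code y)].
Proof.
move=> nxy.
have [xb1 xb2 xk] := code_bound x; have [yb1 yb2 yk] := code_bound y.
move: xb1 xb2 xk yb1 yb2 yk nxy.
case Ex: (code x) => [i p]; case Ey: (code y) => [i' p'] /= xb1 xb2 xk yb1 yb2 yk nxy.
have neq : (i, p) <> (i', p') by move=> E; move/eqP: nxy; apply; apply: code_inj; rewrite Ex Ey.
have [E hh] := hE Hn xb1.
case: (eqVneq p (prj n i (i', p'))) => hp; last first.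
  by exists i, p; split => //; rewrite name_self.
move: hp; rewrite /prj /=.
case: (ltngtP i' i) => hi.
- move=> p0; subst p.
  lia.
- case: (ltnP i.+1 m) => im; last by lia.
  move=> ph; subst p.
  exists i.+1, 0; split => //.
  + by have [_ h4] := hE Hn im; lia.
  + rewrite /prj /=.
    case: (ltngtP i' i.+1) => hi2; try lia.
    have [E2 hh2] := hE Hn im; lia.
- by move=> pp; subst i' p'.
Qed.

Lemma dstep_chain m n (Hn : goodn m n) (x y : chain_vertex m n) : x != y ->
  exists2 x', chain_edge x x' & (dv x' y).+1 = dv x y.
Proof.
move=> nxy; have [k [j [km jn hx hj]]] := memb_exists Hn nxy.
have tn := prj_lt Hn y km; have [E hh] := hE Hn km.
have pos : 0 < cd (n k) (prj n k (code y)) j.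
  rewrite lt0n; apply/negP => /eqP c0; have := cd0 tn jn c0.
  by move=> e; rewrite e eqxx in hj.
case: (cd_down E tn jn pos) => hd.
  have [x' hx'] := exname Hn km (sc_lt jn).
  exists x'; first exact: edge_intro km jn hx (esym hx').
  have := dv_change y km (esym hx) hx'; rewrite (dv_sym x') (dv_sym x); lia.
have [x' hx'] := exname Hn km (pc_lt jn).
exists x'.
  apply: edge_sym; apply: (edge_intro km (pc_lt jn) (esym hx')).
  by rewrite sc_pc.
have := dv_change y km (esym hx) hx'; rewrite (dv_sym x') (dv_sym x); lia.
Qed.

Lemma maxd_memb m n (Hn : goodn m n) (x y : chain_vertex m n) :
  (forall x', chain_edge x x' -> dv y x' <= dv y x) ->
  forall k j, k < m -> j < n k -> chain_name n k j = code x ->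
  cd (n k) (prj n k (code y)) j = (n k)./2.
Proof.
move=> H k j km jn hx.
have tn := prj_lt Hn y km; have [E hh] := hE Hn km.
have le := cd_le E tn jn.
apply/eqP; rewrite eqn_leq le /= leqNgt; apply/negP => lt.
case: (cd_up E tn jn lt) => hu.
  have [x' hx'] := exname Hn km (sc_lt jn).
  have := H x' (edge_intro km jn hx (esym hx')).
  have := dv_change y km (esym hx) hx'; lia.
have [x' hx'] := exname Hn km (pc_lt jn).
have ex : chain_edge x x'.
  apply: edge_sym; apply: (edge_intro km (pc_lt jn) (esym hx')).
  by rewrite sc_pc.
have := H x' ex.
have := dv_change y km (esym hx) hx'; lia.
Qed.

Lemma memb_maxd m n (Hn : goodn m n) (x y : chain_vertex m n) :
  (forall k j, k < m -> j < n k -> chain_name n k j = code x ->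
     cd (n k) (prj n k (code y)) j = (n k)./2) ->
  forall x', chain_edge x x' -> dv y x' <= dv y x.
Proof.
move=> H x' /edge_char [k [j [km jn [[h1 h2]|[h1 h2]]]]];
  have tn := prj_lt Hn y km; have [E hh] := hE Hn km.
  have := H k j km jn h1; have := cd_le E tn (sc_lt jn).
  have := dv_change y km (esym h1) (esym h2); lia.
have := H k _ km (sc_lt jn) h2; have := cd_le E tn jn.
have := dv_change y km (esym h2) (esym h1); lia.
Qed.

Fixpoint sL (n : nat -> nat) (k : nat) : seq (nat * nat) :=
  if k is k'.+1 then sL n k' ++ [seq (k', q) | q <- iota 1 ((n k')./2 - 1)] else [::].

Lemma mem_pairs (k L a b : nat) :
  ((a, b) \in [seq (k, q) | q <- iota 1 L]) = (a == k) && (0 < b < L.+1).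
Proof.
apply/idP/idP => [/mapP [q hq [-> ->]]|/andP[/eqP -> hb]].
  by rewrite eqxx /=; rewrite mem_iota in hq; lia.
by apply/mapP; exists b => //; rewrite mem_iota; lia.
Qed.

Lemma mem_sL n k c : (c \in sL n k) = (c.1 < k) && (0 < c.2 < (n c.1)./2).
Proof.
case: c => a b /=; elim: k => [|k IH] /=; first by rewrite in_nil.
rewrite mem_cat IH mem_pairs.
case: (ltngtP a k) => h.
- by rewrite /= orbF ltnS (ltnW h).
- by rewrite /= ltnS leqNgt h.
- subst a; rewrite /= ltnS leqnn /=.
  apply/idP/idP => /andP[h1 h2]; apply/andP; split => //; lia.
Qed.

Lemma uniq_sL n k : uniq (sL n k).
Proof.
elim: k => //= k IH; rewrite cat_uniq IH /=; apply/andP; split.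
  by apply/hasPn => c /mapP [q _ ->]; rewrite mem_sL /= ltnn.
by rewrite map_inj_uniq ?iota_uniq // => q1 q2 [].
Qed.

Lemma size_sL n k : size (sL n k) = \sum_(i < k) ((n i)./2 - 1).
Proof.
elim: k => [|k IH]; first by rewrite big_ord0.
by rewrite /= size_cat IH size_map size_iota big_ord_recr.
Qed.

Lemma mem_s m n c : (c \in (0, 0) :: sL n m) =
  (c == (0, 0)) || (c.1 < m) && (0 < c.2 < (n c.1)./2).
Proof. by rewrite in_cons mem_sL. Qed.

Lemma uniq_s m n : uniq ((0, 0) :: sL n m).
Proof. by rewrite /= uniq_sL mem_sL /= andbF. Qed.

Definition Wset m n := [set x : chain_vertex m n | code x \in (0, 0) :: sL n m].

Lemma card_W m n (Hm : 2 <= m) (Hn : goodn m n) : #|Wset m n| = size ((0, 0) :: sL n m).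
Proof.
rewrite cardE -(size_map (fun x : chain_vertex m n => code x)).
apply: perm_size; apply: uniq_perm.
- by rewrite map_inj_uniq ?enum_uniq // => a b; apply: code_inj.
- exact: uniq_s.
move=> c; apply/mapP/idP => [[x]|hc].
  by rewrite mem_enum inE => hx ->.
move: (hc); rewrite mem_s => /orP [/eqP ->|/andP [c1 c2]].
  have m0 : 0 < m by lia.
  have [E hh] := hE Hn m0.
  have n0 : 0 < n 0 by lia.
  have [x hx] := exv m0 n0 (eqxx 0 : (0 == 0) || _).
  by exists x; rewrite // mem_enum inE hx.
have [E hh] := hE Hn c1.
have c2' : c.2 < n c.1 by lia.
have kp : (c.1 == 0) || (c.2 != 0) by apply/orP; right; lia.
have [x hx] := exv c1 c2' kp.
exists x; last by rewrite hx; case: c {hc c1 c2 E hh c2' kp hx}.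
by rewrite mem_enum inE hx; case: c hc {c1 c2 E hh c2' kp hx}.
Qed.

Lemma nonW_end m n (Hn : goodn m n) (x y : chain_vertex m n) :
  x \notin Wset m n ->
  (forall x', chain_edge x x' -> dv y x' <= dv y x) ->
  y \in Wset m n \/ code x = (m.-1, (n m.-1)./2).
Proof.
move=> nW H.
have [xb1 xb2 xk] := code_bound x; have [yb1 yb2 yk] := code_bound y.
move: nW xb1 xb2 xk yb1 yb2 yk (maxd_memb Hn H).
rewrite !inE !mem_sL.
case Ex: (code x) => [i p]; case Ey: (code y) => [i' p'] /= nW xb1 xb2 xk yb1 yb2 yk M.
rewrite xpair_eqE in nW.
have [E hh] := hE Hn xb1.
have M1 := M i p xb1 xb2 (name_self n xk).
have tn := prj_lt Hn y xb1; rewrite Ey in tn.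
have cut : p = (n i)./2 -> i' <= i -> (i, p) = (m.-1, (n m.-1)./2).
  move=> hp hi; case: (ltnP i.+1 m) => im; last first.
    have ei : i = m.-1 by lia.
    by rewrite hp ei.
  exfalso.
  have [E2 hh2] := hE Hn im.
  have M2 := M i.+1 0 im ltac:(lia) ltac:(rewrite /chain_name /=; congr (_, _); lia).
  move: M2; rewrite /prj /=.
  have -> : i' < i.+1 by lia.
  by rewrite /cd; lia.
have := cdh E tn xb2 M1; rewrite /prj /=.
case: (ltngtP i' i) => hi.
- case => hh1; first lia.
  by right; apply: cut; lia.
- by case => hh1; exfalso; lia.
- subst i'; case => hh1; first by exfalso; lia.
  case: (posnP p') => p0.
    by right; apply: cut; lia.
  by left; lia.
Qed.

Lemma ub_chain m n (Hm : 2 <= m) (Hn : goodn m n) :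
  strong_resolving_set (@chain_edge m n) (Wset m n).
Proof.
apply: (ub_gen (d := @dv m n)).
- exact: edge_sym.
- exact: dv_sym.
- exact: dv0.
- by move=> x y z; apply: dlip_chain.
- by move=> x y; apply: dstep_chain.
move=> a b nab ma mb.
case: (boolP (a \in Wset m n)) => // na; case: (boolP (b \in Wset m n)) => // nb.
case: (nonW_end Hn na ma) => [hb|ea]; first by rewrite hb in nb.
case: (nonW_end Hn nb mb) => [ha|eb]; first by rewrite ha in na.
by exfalso; move/eqP: nab; apply; apply: code_inj; rewrite ea eb.
Qed.

Definition pim m (n : nat -> nat) (c : nat * nat) :=
  if c.2 == 0 then (m.-1, (n m.-1)./2) else (c.1, c.2 + (n c.1)./2).

Lemma s_sep m n (Hm : 2 <= m) (Hn : goodn m n) (c1 c2 z : nat * nat) :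
  c1 \in (0, 0) :: sL n m -> c2 \in (0, 0) :: sL n m ->
  (z == c1) || (z == pim m n c1) -> (z == c2) || (z == pim m n c2) -> c1 = c2.
Proof.
have Em : m.-1 < m by lia.
have [E' hh'] := hE Hn Em.
case: c1 c2 z => [a1 b1] [a2 b2] [z1 z2]; rewrite !mem_s /pim /= !xpair_eqE.
move=> h1 h2.
case: (eqVneq b1 0) => hb1; case: (eqVneq b2 0) => hb2; rewrite /= ?xpair_eqE;
 move=> /orP [] /andP [/eqP e1 /eqP e2] /orP [] /andP [/eqP e3 /eqP e4];
 subst; try lia; congr (_, _); lia.
Qed.

Lemma memb_only n k j i p : chain_name n k j = (i, p) ->
  (p != (n i)./2) || (k <= i) -> k = i /\ j = p.
Proof.
move=> /memb_inv [[-> [-> _]]//|[k0 [j0 [ei ep]]]].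
by rewrite ep eqxx /= ei; lia.
Qed.

Lemma pair_mmd m n (Hm : 2 <= m) (Hn : goodn m n) c :
  c \in (0, 0) :: sL n m -> exists xa, exists xb : chain_vertex m n,
  [/\ code xa = c, code xb = pim m n c, xa != xb,
      (forall a', chain_edge xa a' -> dv xb a' <= dv xb xa) &
      (forall b', chain_edge xb b' -> dv xa b' <= dv xa xb)].
Proof.
case: c => a b; rewrite mem_s /= xpair_eqE => /orP [/andP [/eqP -> /eqP ->]|/andP [a1 /andP [b1 b2]]].
  have m0 : 0 < m by lia.
  have Em : m.-1 < m by lia.
  have [E0 h0] := hE Hn m0; have [E1 h1] := hE Hn Em.
  have n0 : 0 < n 0 by lia.
  have [xa ha] := exv m0 n0 (eqxx 0 : (0 == 0) || _).
  have nb : (n m.-1)./2 < n m.-1 by lia.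
  have [xb hb] := exv Em nb (ltac:(apply/orP; right; lia) : (m.-1 == 0) || ((n m.-1)./2 != 0)).
  exists xa, xb; split => //.
  - apply/eqP => ex; have := congr1 (fun x : chain_vertex m n => code x) ex.
    by rewrite ha hb => -[]; lia.
  - apply: (memb_maxd Hn) => k j km jn; rewrite ha => /memb_only H.
    have [-> ->] := H ltac:(lia).
    rewrite hb /prj /=; have -> : m.-1 == 0 = false by lia.
    apply: (cdh' E0); lia.
  - apply: (memb_maxd Hn) => k j km jn; rewrite hb => /memb_only H.
    have [-> ->] := H ltac:(lia).
    rewrite ha /prj /=; have -> : 0 < m.-1 by lia.
    apply: (cdh' E1); lia.
have [E h] := hE Hn a1.
have bn : b < n a by lia.
have [xa ha] := exv a1 bn (ltac:(apply/orP; right; lia) : (a == 0) || (b != 0)).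
have bn' : b + (n a)./2 < n a by lia.
have [xb hb] := exv a1 bn' (ltac:(apply/orP; right; lia) : (a == 0) || (b + (n a)./2 != 0)).
have -> : pim m n (a, b) = (a, b + (n a)./2) by rewrite /pim /=; have -> : b == 0 = false by lia.
exists xa, xb; split => //.
- apply/eqP => ex; have := congr1 (fun x : chain_vertex m n => code x) ex.
  by rewrite ha hb => -[]; lia.
- apply: (memb_maxd Hn) => k j km jn; rewrite ha => /memb_only H.
  have [-> ->] := H ltac:(lia).
  rewrite hb /prj /= ltnn eqxx.
  apply: (cdh' E); lia.
- apply: (memb_maxd Hn) => k j km jn; rewrite hb => /memb_only H.
  have [-> ->] := H ltac:(lia).
  rewrite ha /prj /= ltnn eqxx.
  apply: (cdh' E); lia.
Qed.

Lemma lb_chain m n (Hm : 2 <= m) (Hn : goodn m n) (W : {set chain_vertex m n}) :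
  strong_resolving_set (@chain_edge m n) W -> size ((0, 0) :: sL n m) <= #|W|.
Proof.
move=> HW.
have dl : forall x y z : chain_vertex m n, chain_edge x y -> dv x z <= (dv y z).+1.
  by move=> x y z; apply: dlip_chain.
have ds : forall x y : chain_vertex m n, x != y -> exists2 x', chain_edge x x' & (dv x' y).+1 = dv x y.
  by move=> x y; apply: dstep_chain.
have hit : forall c, c \in (0, 0) :: sL n m ->
    exists2 w, w \in W & (code w == c) || (code w == pim m n c).
  move=> c hc; have [xa [xb [ha hb nab ma mb]]] := pair_mmd Hm Hn hc.
  have [w hw hr] := HW xa xb nab.
  have := lb_mmd (@dv0 m n) dl ds ma mb hr; case => ew; subst w.
    by exists xa => //; rewrite ha eqxx.
  by exists xb => //; rewrite hb eqxx orbT.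
have [x0 _] : exists x0 : chain_vertex m n, True.
  by have [xa [xb _]] := pair_mmd Hm Hn (mem_head (0, 0) (sL n m)); exists xa.
pose g c := odflt x0 [pick w in W | (code w == c) || (code w == pim m n c)].
have gP : forall c, c \in (0, 0) :: sL n m ->
    g c \in W /\ ((code (g c) == c) || (code (g c) == pim m n c)).
  move=> c hc; rewrite /g; case: pickP => [w /andP [hw hcw] | none] //=.
  have [w hw hcw] := hit c hc; by move: (none w); rewrite hw hcw.
have inj : {in (0, 0) :: sL n m &, injective g}.
  move=> c1 c2 h1 h2 E; have [_ g1] := gP _ h1; have [_ g2] := gP _ h2.
  rewrite E in g1; exact: (s_sep Hm Hn h1 h2 g1 g2).
have U : uniq (map g ((0, 0) :: sL n m)) by rewrite (map_inj_in_uniq inj) uniq_s.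
have sub : {subset map g ((0, 0) :: sL n m) <= enum W}.
  by move=> w /mapP [c hc ->]; rewrite mem_enum; have [] := gP _ hc.
by have := uniq_leq_size U sub; rewrite size_map -cardE.
Qed.

Theorem theorem3p5 (m : nat) (n : nat -> nat) :
  2 <= m ->
  (forall i, i < m -> 4 <= n i /\ ~~ odd (n i)) ->
  is_sdim (@chain_edge m n) (1 + \sum_(i < m) (n i - 2) %/ 2).
Proof.
move=> Hm Hn'.
have Hn : goodn m n := Hn'.
have -> : 1 + \sum_(i < m) (n i - 2) %/ 2 = size ((0, 0) :: sL n m).
  rewrite /= size_sL add1n; congr S; apply: eq_bigr => i _.
  have [E hh] := hE Hn (ltn_ord i); lia.
split.
  exists (Wset m n); split; first exact: ub_chain.
  exact: card_W.
move=> W HW; exact: lb_chain.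
Qed.
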